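(* Let $G$ be a finite simple graph and let $G_1,\dots,G_k$ be its connected components. Then $\alpha^*(G)\geq \sum_{i=1}^k \alpha^*(G_i)$. As a result, if $G$ has $k$ components, then $\alpha^*(G)\geq k$.
   Context: For a graph $H$, an independent set $I$ of $H$ is light if $\sum_{u\in I}d_H(u)\le |V(H)|-1$; $\alpha^*(H)$ is the maximum size of a light independent set of $H$. *)

(* Defs.v *)
From mathcomp Require Import all_boot.
Set Implicit Arguments. Unset Strict Implicit. Unset Printing Implicit Defensive.

(* A finite simple graph: vertex set a finType T, edge relation e : rel T,
   assumed symmetric and irreflexive in the theorem. *)

Definition deg_in (T : finType) (e : rel T) (S : {set T}) (u : T) : nat :=
  #|[set v in S | e u v]|.

Definition indep_in (T : finType) (e : rel T) (S I : {set T}) : bool :=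
  (I \subset S) && [forall u in I, forall v in I, ~~ e u v].

Definition light_in (T : finType) (e : rel T) (S I : {set T}) : bool :=
  indep_in e S I && (\sum_(u in I) deg_in e S u <= #|S| - 1).

Definition alpha_star (T : finType) (e : rel T) (S : {set T}) : nat :=
  \max_(I : {set T} | light_in e S I) #|I|.

Definition components (T : finType) (e : rel T) : {set {set T}} :=
  [set [set y | connect e x y] | x : T].

(* Main.v *)
Require Import Defs.
From mathcomp Require Import all_boot zify.
Set Implicit Arguments. Unset Strict Implicit. Unset Printing Implicit Defensive.

Section Aux.
Variables (T : finType) (e : rel T).
Hypotheses (e_sym : symmetric e) (e_irr : irreflexive e).

Definition comp (x : T) : {set T} := [set y | connect e x y].

Lemma csym : connect_sym e.
Proof. exact: sym_connect_sym. Qed.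

Lemma comp_mem C u : C \in components e -> u \in C -> comp u = C.
Proof.
case/imsetP=> x _ ->; rewrite inE => hxu; rewrite /comp.
apply/setP=> y; rewrite !inE; apply/idP/idP => h.
  exact: connect_trans hxu h.
by apply: connect_trans h; rewrite csym.
Qed.

Lemma comp_in u : comp u \in components e.
Proof. by apply/imsetP; exists u. Qed.

Lemma comp_self u : u \in comp u.
Proof. by rewrite inE connect0. Qed.

Lemma comp_edge C u v : C \in components e -> u \in C -> e u v -> v \in C.
Proof.
move=> hC hu huv; rewrite -(comp_mem hC hu) inE.
exact: connect1.
Qed.

Lemma deg_comp C u : C \in components e -> u \in C ->
  deg_in e [set: T] u = deg_in e C u.
Proof.
move=> hC hu; rewrite /deg_in; apply: eq_card => v; rewrite !inE.
by case h: (e u v); rewrite ?andbT ?andbF // (comp_edge hC hu h).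
Qed.

Lemma card_sum : \sum_(C in components e) #|C| = #|T|.
Proof.
rewrite -sum1_card (partition_big comp (mem (components e))) /=; last by move=> i _; exact: comp_in.
apply: eq_bigr => C hC; rewrite -sum1_card; apply: eq_bigl => u.
apply/idP/eqP => [hu|<-]; last exact: comp_self.
exact: comp_mem.
Qed.

Lemma alpha_ge1 C : C \in components e -> 1 <= alpha_star e C.
Proof.
move=> hC; have [x hx] : exists x, x \in C.
  by case/imsetP: hC => x _ ->; exists x; exact: comp_self.
have -> : 1 = #|[set x]| by rewrite cards1.
rewrite /alpha_star; apply: (@leq_bigmax_cond _ (fun I => light_in e C I) (fun I : {set T} => #|I|) [set x]).
rewrite /light_in /indep_in sub1set hx /=.
apply/andP; split.
  by apply/forall_inP=> u; rewrite inE => /eqP->; apply/forall_inP=> v; rewrite inE => /eqP->; rewrite e_irr.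
rewrite big_set1 /deg_in.
have : [set v in C | e x v] \subset C :\ x.
  apply/subsetP=> v; rewrite !inE => /andP[hv hxv]; rewrite hv andbT.
  by apply/eqP=> exv; rewrite exv e_irr in hxv.
move/subset_leq_card; rewrite (cardsD1 x C) hx /=.
by rewrite add1n subn1 /=.
Qed.

End Aux.

Theorem lemma2p2 (T : finType) (e : rel T)
    (e_sym : symmetric e) (e_irr : irreflexive e) :
  \sum_(C in components e) alpha_star e C <= alpha_star e [set: T]
  /\ #|components e| <= alpha_star e [set: T].
Proof.
have hf : forall C : {set T}, {I | light_in e C I & alpha_star e C = #|I|}.
  move=> C; apply: eq_bigmax_cond; apply/card_gt0P; exists set0.
  rewrite unfold_in /= /indep_in sub0set big_set0 /=.
  by rewrite ?andbT; apply/forall_inP=> u; rewrite inE.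
pose f C := s2val (hf C).
have fl C : light_in e C (f C) by rewrite /f; case: (hf C).
have fa C : alpha_star e C = #|f C| by rewrite /f; case: (hf C).
have fsub C : f C \subset C by case/andP: (fl C) => /andP[].
pose I := \bigcup_(C in components e) f C.
have memI u C : C \in components e -> (u \in f C) = (u \in I) && (comp e u == C).
  move=> hC; apply/idP/idP.
    move=> hu; have huC : u \in C := subsetP (fsub C) u hu.
    rewrite (comp_mem e_sym hC huC) eqxx andbT.
    by apply/bigcupP; exists C.
  case/andP=> /bigcupP[C' hC' hu] /eqP hc.
  have huC : u \in C' := subsetP (fsub C') u hu.
  by rewrite (comp_mem e_sym hC' huC) in hc; rewrite -hc.
have sumI (F : T -> nat) :
    \sum_(u in I) F u = \sum_(C in components e) \sum_(u in f C) F u.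
  rewrite (partition_big (comp e) (mem (components e))) /=; last by move=> i _; exact: comp_in.
  apply: eq_bigr => C hC; apply: eq_bigl => u; by rewrite (memI u C hC).
have part1 : \sum_(C in components e) alpha_star e C <= alpha_star e [set: T].
  have -> : \sum_(C in components e) alpha_star e C = #|I|.
    rewrite -sum1_card sumI; apply: eq_bigr => C _; by rewrite fa -sum1_card.
  rewrite /alpha_star; apply: (@leq_bigmax_cond _ (fun J => light_in e [set: T] J) (fun J : {set T} => #|J|) I).
  rewrite /light_in /indep_in subsetT /=; apply/andP; split.
    apply/forall_inP=> u /bigcupP[C1 hC1 hu]; apply/forall_inP=> v /bigcupP[C2 hC2 hv].
    apply/negP=> huv.
    have huC : u \in C1 := subsetP (fsub C1) u hu.
    have hvC : v \in C2 := subsetP (fsub C2) v hv.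
    have hvC1 : v \in C1 := comp_edge e_sym hC1 huC huv.
    have eC : C1 = C2 by rewrite -(comp_mem e_sym hC1 hvC1) (comp_mem e_sym hC2 hvC).
    subst C2.
    case/andP: (fl C1) => /andP[_ /forall_inP /(_ u hu) /forall_inP /(_ v hv)].
    by rewrite huv.
  rewrite sumI.
  have step : forall C, C \in components e ->
      \sum_(u in f C) deg_in e [set: T] u <= #|C| - 1.
    move=> C hC; have /andP[_ hl] := fl C.
    rewrite (eq_bigr (fun u => deg_in e C u)) ?hl // => u hu.
    apply: (deg_comp e_sym hC); exact: (subsetP (fsub C)).
  apply: (@leq_trans (\sum_(C in components e) (#|C| - 1))); first exact: leq_sum.
  rewrite cardsT -(card_sum e_sym).
  case: (pickP (mem (components e))) => [C0 hC0|h0].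
    rewrite (bigD1 C0) //= [X in _ <= X - 1](bigD1 C0) //=.
    set a := (X in #|C0| - 1 + X); set b := (X in _ <= #|C0| + X - 1).
    have : a <= b by apply: leq_sum => i _; exact: leq_subr.
    have : 0 < #|C0|.
      by case/imsetP: hC0 => x _ ->; apply/card_gt0P; exists x; exact: comp_self.
    lia.
  by rewrite big_pred0.
split => //.
apply: leq_trans part1; rewrite -sum1_card; apply: leq_sum => C hC.
exact: alpha_ge1.
Qed.
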